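(* Let $S$ be a quasi-thin scheme on $X$. Then the $\mathbb F$-dimension of the Terwilliger $\mathbb F$-algebra $\mathcal T(y)$ of $S$ with respect to $y$ does not depend on the characteristic of the field $\mathbb F$ nor on the choice of the vertex $y\in X$.
   Context: Let $X$ be a nonempty finite set. A scheme of class $d$ on $X$ is a partition $S=\{R_0,\dots,R_d\}$ of $X\times X$ into nonempty sets such that $R_0=\{(b,b):b\in X\}$; for each $c$ there is $c'$ with $R_{c'}=\{(f,e):(e,f)\in R_c\}$; and for all $i,j,k$ the intersection number $p_{ij}^k=|\{\ell\in X:(m,\ell)\in R_i,(\ell,n)\in R_j\}|$ does not depend on $(m,n)\in R_k$. The valency is $k_a=p_{aa'}^0$; quasi-thin means all $k_a\le 2$. For a field $\mathbb F$ and $y\in X$, $yR_a=\{z:(y,z)\in R_a\}$, $A_a\in M_X(\mathbb F)$ is the $(0,1)$ adjacency matrix of $R_a$, $E_a^*(y)$ is the diagonal $(0,1)$-matrix with ones exactly at positions indexed by $yR_a$, and $\mathcal T(y)$ is the $\mathbb F$-subalgebra of $M_X(\mathbb F)$ generated by $A_0,\dots,A_d,E_0^*(y),\dots,E_d^*(y)$. *)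

(* Defs.v *)
From HB Require Import structures.
From mathcomp Require Import all_boot all_order all_algebra all_field.
Set Implicit Arguments. Unset Strict Implicit. Unset Printing Implicit Defensive.
Import GRing.Theory.
Local Open Scope ring_scope.

(* A partition S = {R_0,...,R_d} of X x X is encoded by the map
   r : X -> X -> 'I_d.+1 with (e,f) \in R_a  <->  r e f = a. *)

Definition is_transpose (X : finType) (d : nat) (r : X -> X -> 'I_d.+1)
  (c c' : 'I_d.+1) : Prop :=
  forall e f : X, (r e f == c') = (r f e == c).

Definition is_scheme (X : finType) (d : nat) (r : X -> X -> 'I_d.+1) : Prop :=
  [/\
      forall a : 'I_d.+1, exists e f : X, r e f = a,
      forall e f : X, (r e f == ord0) = (e == f),
      forall c : 'I_d.+1, exists c' : 'I_d.+1, is_transpose r c c' &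
      forall (i j k : 'I_d.+1) (m n m' n' : X), r m n = k -> r m' n' = k ->
        #|[set l | (r m l == i) && (r l n == j)]|
        = #|[set l | (r m' l == i) && (r l n' == j)]| ].

(* quasi-thin: every valency k_a = p_{a a'}^0 (computed at any (m,m) in R_0) is <= 2 *)
Definition quasi_thin (X : finType) (d : nat) (r : X -> X -> 'I_d.+1) : Prop :=
  forall a a' : 'I_d.+1, is_transpose r a a' ->
    forall m : X, (#|[set l | (r m l == a) && (r l m == a')]| <= 2)%N.

(* rows/columns of matrices in M_X(F) are indexed through the enumeration of X;
   the matrix size #|X|.-1.+1 equals #|X| since X is nonempty. *)
Definition idxX (X : finType) (x0 : X) (i : nat) : X := nth x0 (enum X) i.

Definition adjmx (F : fieldType) (X : finType) (x0 : X) (d : nat)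
  (r : X -> X -> 'I_d.+1) (a : 'I_d.+1) : 'M[F]_(#|X|.-1.+1) :=
  \matrix_(i, j) ((r (idxX x0 i) (idxX x0 j) == a)%:R : F).

Definition dualidem (F : fieldType) (X : finType) (d : nat)
  (r : X -> X -> 'I_d.+1) (y : X) (a : 'I_d.+1) : 'M[F]_(#|X|.-1.+1) :=
  \matrix_(i, j) (((i == j) && (r y (idxX y i) == a))%:R : F).

Definition terwilliger (F : fieldType) (X : finType) (d : nat)
  (r : X -> X -> 'I_d.+1) (y : X) : {vspace 'M[F]_(#|X|.-1.+1)} :=
  agenv (<< [seq adjmx F y r a | a <- enum 'I_d.+1]
           ++ [seq dualidem F r y a | a <- enum 'I_d.+1] >>)%VS.

Definition terwilliger_dim (F : fieldType) (X : finType) (d : nat)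
  (r : X -> X -> 'I_d.+1) (y : X) : nat := \dim (terwilliger F r y).

(* Main.v *)
Require Import Defs.
From mathcomp Require Import all_boot all_order all_algebra all_field.
From mathcomp Require Import zify.
Import GRing.Theory.
Set Implicit Arguments. Unset Strict Implicit. Unset Printing Implicit Defensive.

Section Basic.
Variables (X : finType) (d : nat) (r : X -> X -> 'I_d.+1).
Hypothesis hS : is_scheme r.
Hypothesis hQ : quasi_thin r.

Lemma r_diag u v : (r u v == ord0) = (u == v).
Proof. by case: hS. Qed.

Lemma r_refl u : r u u = ord0.
Proof. by apply/eqP; rewrite r_diag. Qed.

Lemma transp c : exists c', forall e f, (r e f == c') = (r f e == c).
Proof. by case: hS => _ _ H _; apply: H. Qed.

Definition cnt m n i j := #|[set l | (r m l == i) && (r l n == j)]|.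

Lemma cnt_reg m n m' n' i j : r m n = r m' n' -> cnt m n i j = cnt m' n' i j.
Proof. by case: hS => _ _ _ H E; apply: (H i j (r m n)). Qed.

Definition kk y a := #|[set v | r y v == a]|.

Lemma kk_cnt y a a' : (forall e f, (r e f == a') = (r f e == a)) -> kk y a = cnt y y a a'.
Proof. by move=> Ha; rewrite /kk /cnt; apply: eq_card => l; rewrite !inE Ha andbb. Qed.

Lemma kk_indep y y' a : kk y a = kk y' a.
Proof.
have [a' Ha] := transp a.
by rewrite !(kk_cnt _ Ha); apply: cnt_reg; rewrite !r_refl.
Qed.

Lemma kk_le2 y a : kk y a <= 2.
Proof.
have [a' Ha] := transp a.
rewrite (kk_cnt _ Ha); exact: hQ.
Qed.

Lemma kk_gt0 y a : 0 < kk y a.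
Proof.
case: hS => H _ _ _; have [e [f Hef]] := H a.
rewrite (kk_indep y e); apply/card_gt0P; exists f; by rewrite inE Hef.
Qed.

Definition rowcnt y u c b := #|[set w | (r y w == c) && (r u w == b)]|.
Definition colcnt y v a b := #|[set w | (r y w == a) && (r w v == b)]|.

Lemma rowcnt_reg y u y' u' c b : r y u = r y' u' -> rowcnt y u c b = rowcnt y' u' c b.
Proof.
move=> E; have [b' Hb] := transp b.
have H z x : rowcnt z x c b = cnt z x c b'.
  by apply: eq_card => l; rewrite !inE Hb.
by rewrite !H; apply: cnt_reg.
Qed.

Lemma colcnt_reg y v y' v' a b : r y v = r y' v' -> colcnt y v a b = colcnt y' v' a b.
Proof. exact: cnt_reg. Qed.


Definition tau y u := odflt u [pick w | (r y w == r y u) && (w != u)].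

Lemma tau_fib y u : r y (tau y u) = r y u.
Proof. by rewrite /tau; case: pickP => //= w /andP[/eqP]. Qed.

Lemma fib_cases y u w : r y w = r y u -> w = u \/ w = tau y u.
Proof.
move=> E; have [->|nwu] := eqVneq w u; first by left.
right; rewrite /tau; case: pickP => [w0 /andP[/eqP E0 n0] /=|/(_ w)]; last first.
  by rewrite E eqxx nwu.
apply/eqP; apply/negP => nww0.
have := kk_le2 y (r y u); rewrite /kk.
have sub : [set u; w; w0] \subset [set v | r y v == r y u].
  by apply/subsetP => z; rewrite !inE => /orP[/orP[]|] /eqP ->; rewrite ?E ?E0 eqxx.
move: (subset_leq_card sub); rewrite setUC cardsU1 cards2 !inE.
rewrite (negbTE n0) [u == w]eq_sym (negbTE nwu) eq_sym (negbTE (introN idP nww0)) /=; lia.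
Qed.

Lemma tau_fix y v w : tau y v = v -> r y w = r y v -> w = v.
Proof.
rewrite /tau; case: pickP => [w0 /andP[_ n0] /= E|/(_ w) H _ E].
  by move: n0; rewrite E eqxx.
by move: H; rewrite E eqxx /=; move/negbFE/eqP.
Qed.

Lemma tauK y : involutive (tau y).
Proof.
move=> u; have [E|ne] := eqVneq (tau y u) u; first by rewrite E E.
have : r y (tau y (tau y u)) = r y u by rewrite !tau_fib.
case/fib_cases => // E.
by have := tau_fix E (esym (tau_fib y u)) => /eqP; rewrite eq_sym (negbTE ne).
Qed.

Lemma tau_inj y : injective (tau y).
Proof. exact: inv_inj (tauK y). Qed.

Lemma fib_card y u : kk y (r y u) = if tau y u == u then 1 else 2.
Proof.
rewrite /kk; have -> : [set v | r y v == r y u] = [set u; tau y u].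
  apply/setP => v; rewrite !inE; apply/idP/idP => [/eqP/fib_cases[]->|/orP[]/eqP->];
  by rewrite ?eqxx ?orbT ?tau_fib.
by case: eqP => [->|/eqP ne]; rewrite ?setUid ?cards1 // cards2 eq_sym ne.
Qed.

Lemma tau_k2 y u : (tau y u != u) = (kk y (r y u) == 2).
Proof. by rewrite fib_card; case: eqP. Qed.

Lemma fib_sum (R : Type) (idx : R) (op : Monoid.com_law idx) (G : X -> R) y v :
  \big[op/idx]_(w | r y w == r y v) G w =
  if tau y v == v then G v else op (G v) (G (tau y v)).
Proof.
rewrite (bigD1 v) //=; case: eqP => [E|/eqP ne].
  rewrite big_pred0 ?Monoid.mulm1 // => w; apply/negP => /andP[/eqP/fib_cases[]-> ].
    by rewrite eqxx. by rewrite E eqxx.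
rewrite (bigD1 (tau y v)) /=; last by rewrite tau_fib eqxx ne.
rewrite big_pred0 ?Monoid.mulm1 // => w; apply/negP => /andP[/andP[/eqP/fib_cases[]->]].
  by rewrite eqxx. by rewrite eqxx.
Qed.

Lemma card_fib y v (P : pred X) :
  #|[set w | (r y w == r y v) && P w]| =
  if tau y v == v then nat_of_bool (P v) else P v + P (tau y v).
Proof.
rewrite cardsE -sum1_card.
rewrite (eq_bigl (fun w => (r y w == r y v) && P w)) // big_mkcondr /=.
rewrite (eq_bigr (fun w => nat_of_bool (P w))); last by move=> w _; case: (P w).
by rewrite (@fib_sum _ 0 addn).
Qed.

Lemma tau_inv y u v : r (tau y u) (tau y v) = r u v.
Proof.
set b := r u v.
have R := rowcnt_reg (r y v) b (esym (tau_fib y u)).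
have C := colcnt_reg (r y u) b (esym (tau_fib y v)).
move: R C; rewrite /rowcnt /colcnt !card_fib.
case: (eqVneq (tau y u) u) => [Eu|Nu]; case: (eqVneq (tau y v) v) => [Ev|Nv].
- by rewrite Eu Ev.
- rewrite Eu /b eqxx => _; case: eqP => //.
- rewrite Ev /b eqxx; case: eqP => //.
- rewrite /b eqxx => R C; apply/eqP; move: R C.
  case: (r u (tau y v) == r u v); case: (r (tau y u) v == r u v);
  case: (r (tau y u) (tau y v) == r u v) => //=.
Qed.

Definition lk y : rel 'I_d.+1 := fun a c =>
  [exists u, exists v, [&& r y u == a, r y v == c & r u v != r u (tau y v)]].

Definition sc y a c := [&& kk y a == 2, kk y c == 2 & connect (lk y) a c].

Lemma lk_k2 y a c : lk y a c -> (kk y a == 2) && (kk y c == 2).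
Proof.
case/existsP => u /existsP[v /and3P[/eqP <- /eqP <- ne]].
have Nv : tau y v != v by apply: contraNneq ne => ->.
rewrite -!tau_k2 Nv andbT; apply: contraNneq ne => Eu.
by rewrite -[X in _ == r X _]Eu tau_inv.
Qed.

Lemma row_const y u v : ~~ sc y (r y u) (r y v) -> r u (tau y v) = r u v.
Proof.
move=> nsc; have [->//|Nv] := eqVneq (tau y v) v.
have [Eu|Nu] := eqVneq (tau y u) u; first by rewrite -{1}Eu tau_inv.
move: nsc; rewrite /sc -!tau_k2 Nu Nv /= => nc.
have : ~~ lk y (r y u) (r y v) by apply: contra nc; exact: connect1.
move/existsPn/(_ u)/existsPn/(_ v); rewrite !eqxx /=.
by move/negbNE/eqP.
Qed.

Lemma fib_ex y a : exists u, r y u = a.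
Proof.
have /card_gt0P[u] := kk_gt0 y a; rewrite inE => /eqP <-; by exists u.
Qed.

Lemma lk_indep1 y y' a c : lk y a c -> lk y' a c.
Proof.
move=> L; have /andP[_ k2] := lk_k2 L.
move: L => /existsP[u /existsP[v /and3P[/eqP Eu /eqP Ev ne]]].
set b := r u v.
have Nv : tau y v != v by apply: contraNneq ne => ->.
have [u' Eu'] := fib_ex y' a; have [v' Ev'] := fib_ex y' c.
have R := rowcnt_reg c b (etrans Eu (esym Eu')).
move: R; rewrite /rowcnt -{1}Ev -Ev' !card_fib (negbTE Nv) /b eqxx [r u (tau y v) == _]eq_sym (negbTE ne) Ev'.
have Nv' : tau y' v' != v' by rewrite tau_k2 Ev' (kk_indep y' y) -Ev -tau_k2.
rewrite (negbTE Nv') /=.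
case E1: (r u' v' == b); case E2: (r u' (tau y' v') == b) => //= _.
- apply/existsP; exists u'; apply/existsP; exists v'.
  by rewrite Eu' Ev' !eqxx (eqP E1) eq_sym E2.
- apply/existsP; exists u'; apply/existsP; exists (tau y' v').
  by rewrite Eu' tau_fib Ev' !eqxx (eqP E2) tauK eq_sym E1.
Qed.

Lemma lk_indep y y' : lk y =2 lk y'.
Proof. by move=> a c; apply/idP/idP; apply: lk_indep1. Qed.

Lemma sc_indep y y' a c : sc y a c = sc y' a c.
Proof. by rewrite /sc (kk_indep y y' a) (kk_indep y y' c) (eq_connect (lk_indep y y')). Qed.

Lemma sc_trans y a b c : sc y a b -> sc y b c -> sc y a c.
Proof.
move=> /and3P[ka _ H1] /and3P[_ kc H2]; by rewrite /sc ka kc (connect_trans H1 H2).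
Qed.

Section Mx.
Variables (F : fieldType) (y : X).
Local Open Scope ring_scope.

Local Notation N := (#|X|.-1.+1).

Definition io (i : 'I_N) : X := idxX y i.
Definition ro (u : X) : 'I_N := inord (index u (enum X)).

Lemma cardX_pos : (0 < #|X|)%N.
Proof. by apply/card_gt0P; exists y. Qed.

Lemma idx_lt u : (index u (enum X) < N)%N.
Proof. by rewrite prednK ?cardX_pos // cardE index_mem mem_enum. Qed.

Lemma ioK u : io (ro u) = u.
Proof. by rewrite /io /idxX /ro inordK ?idx_lt // nth_index // mem_enum. Qed.

Lemma roK i : ro (io i) = i.
Proof.
apply: val_inj; rewrite /= inordK; last by rewrite /io /idxX; apply: idx_lt.
rewrite /io /idxX index_uniq ?enum_uniq //.
have := ltn_ord i; move: (i : nat) => k; by rewrite prednK ?cardX_pos // cardE.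
Qed.

Definition mx_of (f : X -> X -> F) : 'M[F]_N := \matrix_(i, j) f (io i) (io j).

Lemma mx_ofE f u v : mx_of f (ro u) (ro v) = f u v.
Proof. by rewrite mxE !ioK. Qed.

Lemma mx_of_eq f g : (forall u v, f u v = g u v) -> mx_of f = mx_of g.
Proof. by move=> H; apply/matrixP => i j; rewrite !mxE H. Qed.

Lemma mxro (M : 'M[F]_N) : M = mx_of (fun u v => M (ro u) (ro v)).
Proof. by apply/matrixP => i j; rewrite !mxE !roK. Qed.

Lemma mx_ofM f g : mx_of f * mx_of g = mx_of (fun u v => \sum_w f u w * g w v).
Proof.
apply/matrixP => i j; rewrite -mulmxE !mxE.
rewrite (reindex ro (onW_bij _ (Bijective ioK roK))) /=.
by apply: eq_bigr => w _; rewrite !mxE ioK.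
Qed.

Lemma mulE (M P : 'M[F]_N) u v :
  (M * P) (ro u) (ro v) = \sum_w M (ro u) (ro w) * P (ro w) (ro v).
Proof. by rewrite [M]mxro [P]mxro mx_ofM mx_ofE; apply: eq_bigr => w _; rewrite !mx_ofE. Qed.

Lemma adjmxE b : adjmx F y r b = mx_of (fun u v => (r u v == b)%:R).
Proof. by []. Qed.

Lemma dualidemE a : dualidem F r y a = mx_of (fun u v => ((u == v) && (r y u == a))%:R).
Proof.
apply/matrixP => i j; rewrite !mxE; congr (_ %:R); congr (_ && _).
apply/eqP/eqP => [->//|E]; rewrite -(roK i) -(roK j); exact: (congr1 ro E).
Qed.

Definition gens := [seq adjmx F y r a | a <- enum 'I_d.+1] ++
                   [seq dualidem F r y a | a <- enum 'I_d.+1].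
Definition TT := terwilliger F r y.

Lemma TT_adj b : adjmx F y r b \in TT.
Proof.
apply: (subvP (sub_agenv _)); apply: memv_span; rewrite mem_cat; apply/orP; left.
by apply/mapP; exists b; rewrite ?mem_enum.
Qed.

Lemma TT_E a : dualidem F r y a \in TT.
Proof.
apply: (subvP (sub_agenv _)); apply: memv_span; rewrite mem_cat; apply/orP; right.
by apply/mapP; exists a; rewrite ?mem_enum.
Qed.

Lemma TT_mul A B : A \in TT -> B \in TT -> A * B \in TT.
Proof. by move=> HA HB; have := memv_mul HA HB; rewrite /TT /terwilliger agenvM. Qed.

Definition Bc (M : 'M[F]_N) : Prop :=
  (forall u v, M (ro (tau y u)) (ro (tau y v)) = M (ro u) (ro v)) /\
  (forall u v, ~~ sc y (r y u) (r y v) -> M (ro u) (ro (tau y v)) = M (ro u) (ro v)).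

Lemma Bc0 : Bc 0.
Proof. by split => u v; rewrite !mxE. Qed.

Lemma BcD A B : Bc A -> Bc B -> Bc (A + B).
Proof.
move=> [A1 A2] [B1 B2]; split => u v; rewrite !mxE ?A1 ?B1 //.
by move=> H; rewrite A2 ?B2.
Qed.

Lemma BcZ k A : Bc A -> Bc (k *: A).
Proof. by move=> [A1 A2]; split => u v; rewrite !mxE ?A1 // => H; rewrite A2. Qed.

Lemma Bc_span (s : seq 'M[F]_N) :
  (forall x, x \in s -> Bc x) -> forall M, M \in <<s>>%VS -> Bc M.
Proof.
move=> H M HM; rewrite (@coord_span _ _ _ (in_tuple s) M HM).
apply: (big_ind Bc Bc0 BcD) => i _; apply: BcZ; apply: H.
by apply: mem_nth; exact: ltn_ord.
Qed.

Lemma Bc_mul A B : Bc A -> Bc B -> Bc (A * B).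
Proof.
move=> [A1 A2] [B1 B2]; split => u v.
  rewrite !mulE (reindex_inj (@tau_inj y)) /=.
  by apply: eq_bigr => w _; rewrite A1 B1.
move=> nsc; rewrite !mulE.
rewrite (bigID (fun w => sc y (r y u) (r y w))) [RHS](bigID (fun w => sc y (r y u) (r y w))) /=.
congr (_ + _).
  apply: eq_bigr => w H; rewrite B2 //; apply: contra nsc => H2.
  exact: sc_trans H H2.
rewrite (eq_bigr (fun w => A (ro u) (ro (tau y w)) * B (ro w) (ro (tau y v)))); last first.
  by move=> w H; rewrite A2.
rewrite (reindex_inj (@tau_inj y)) /=.
apply: eq_big => w; first by rewrite tau_fib.
by move=> _; rewrite tauK B1.
Qed.

Definition p a := odflt y [pick v | r y v == a].

Lemma p_fib a : r y (p a) = a.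
Proof.
rewrite /p; case: pickP => [v /eqP //|/=]; have [u Hu] := fib_ex y a.
by move/(_ u); rewrite Hu eqxx.
Qed.

Lemma fib_p u a : r y u = a -> u = p a \/ u = tau y (p a).
Proof. by move=> E; apply: fib_cases; rewrite p_fib. Qed.

Lemma tau_p a : (tau y (p a) != p a) = (kk y a == 2%N).
Proof. by rewrite tau_k2 p_fib. Qed.

Definition Idx := ('I_d.+1 * 'I_d.+1 * bool)%type.

Definition cls u v : Idx :=
  (r y u, r y v, sc y (r y u) (r y v) && ((u == p (r y u)) != (v == p (r y v)))).

Definition Pidx (x : Idx) := ~~ x.2 || sc y x.1.1 x.1.2.

Definition clf (x : Idx) u v : bool :=
  [&& r y u == x.1.1, r y v == x.1.2 &
   if x.2 then (u == p x.1.1) != (v == p x.1.2)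
   else if sc y x.1.1 x.1.2 then (u == p x.1.1) == (v == p x.1.2) else true].

Definition cl (x : Idx) := mx_of (fun u v => (clf x u v)%:R).

Definition idx := [seq x <- enum {: Idx} | Pidx x].
Definition bas := map cl idx.

Lemma cls_P u v : Pidx (cls u v).
Proof. by rewrite /Pidx /cls /=; case: (sc _ _ _) => //=; rewrite orbT. Qed.

Lemma clf_cls x u v : Pidx x -> clf x u v = (x == cls u v).
Proof.
case: x => [[a c] b]; rewrite /Pidx /clf /cls /= !xpair_eqE.
case: (eqVneq (r y u) a) => [<-|ne] //.
case: (eqVneq (r y v) c) => [<-|ne]; last by rewrite !andbF.
rewrite /=.
by case: b; case: (sc _ _ _); case: (u == _); case: (v == _).
Qed.

Definition wu (x : Idx) := p x.1.1.
Definition wv (x : Idx) := if x.2 then tau y (p x.1.2) else p x.1.2.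

Lemma w_cls x : Pidx x -> cls (wu x) (wv x) = x.
Proof.
case: x => [[a c] b]; rewrite /Pidx /cls /wu /wv /= p_fib.
case: b => /= H.
  rewrite tau_fib p_fib H eqxx /=.
  by move: H => /and3P[_ k2 _]; rewrite -tau_p in k2; rewrite (negbTE k2).
by rewrite p_fib !eqxx andbF.
Qed.

Lemma Bc_rep M a c u v : Bc M -> r y u = a -> r y v = c ->
  M (ro (p a)) (ro (if sc y a c && ((u == p a) != (v == p c)) then tau y (p c) else p c))
  = M (ro u) (ro v).
Proof.
move=> [M1 M2] Eu Ev.
have [Hsc|nsc] := boolP (sc y a c).
  have /and3P[ka kc _] := Hsc.
  rewrite -tau_p in ka; rewrite -tau_p in kc.
  rewrite /=; case: (fib_p Eu) => ->; case: (fib_p Ev) => ->;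
    rewrite ?eqxx ?(negbTE ka) ?(negbTE kc) //=.
  - by rewrite -M1 tauK.
rewrite /=.
have E1 : M (ro u) (ro v) = M (ro u) (ro (p c)).
  case: (fib_p Ev) => -> //; apply: M2; by rewrite Eu p_fib.
rewrite E1; case: (fib_p Eu) => -> //.
rewrite -M1 tauK M2 // !p_fib //.
Qed.

Lemma Bc_mem M : Bc M -> M \in <<bas>>%VS.
Proof.
move=> HM.
have -> : M = \sum_(x <- idx) M (ro (wu x)) (ro (wv x)) *: cl x.
  apply/matrixP => i j; rewrite -(roK i) -(roK j); set u := io i; set v := io j.
  rewrite summxE /idx big_filter big_enum_cond /=.
  rewrite (bigD1 (cls u v)) ?cls_P //= big1 ?addr0.
    rewrite !mxE !ioK clf_cls ?cls_P // eqxx mulr1.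
    by rewrite /wu /wv /= Bc_rep.
  move=> x /andP[Px ne]; rewrite !mxE !ioK clf_cls // (negbTE ne) mulr0 //.
rewrite big_seq; apply: memv_suml => x Hx; apply: memvZ; apply: memv_span.
by apply: map_f.
Qed.

Lemma idx_uniq : uniq idx.
Proof. by rewrite /idx filter_uniq // enum_uniq. Qed.

Lemma bas_free : free bas.
Proof.
apply/(@freeP _ _ _ (in_tuple bas)) => k Hk i.
have x0 : Idx := (ord0, ord0, false).
have Hi : (i < size idx)%N by rewrite -(size_map cl); exact: ltn_ord.
set x := nth x0 idx i.
have Px : Pidx x by have := mem_nth x0 Hi; rewrite mem_filter => /andP[].
have := congr1 (fun M : 'M[F]_N => M (ro (wu x)) (ro (wv x))) Hk.
rewrite summxE mxE (bigD1 i) //= big1 ?addr0.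
  rewrite mxE /= (nth_map x0) // mx_ofE clf_cls; last first.
    by have := mem_nth x0 Hi; rewrite mem_filter => /andP[].
  by rewrite w_cls // eqxx mulr1.
move=> j ne; rewrite mxE /=.
have Hj : (j < size idx)%N by rewrite -(size_map cl); exact: ltn_ord.
have Pj : Pidx (nth x0 idx j) by have := mem_nth x0 Hj; rewrite mem_filter => /andP[].
rewrite (nth_map x0) // mx_ofE clf_cls // w_cls //.
have ne2 : (j : nat) != i := ne.
by rewrite /x nth_uniq ?idx_uniq // (negbTE ne2) mulr0.
Qed.

Lemma dim_bas : \dim <<bas>>%VS = size idx.
Proof. by have := bas_free; rewrite /free size_map => /eqP. Qed.

Lemma eq_tau_nsc u v : ~~ sc y (r y u) (r y v) -> (u == tau y v) = (u == v).
Proof.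
move=> H; have [E|ne] := eqVneq (tau y v) v; first by rewrite E.
have k2 : kk y (r y v) == 2%N by rewrite -tau_k2.
have scv : sc y (r y v) (r y v) by rewrite /sc k2 connect0.
case: eqP => [Eu|_]; first by move: H; rewrite Eu tau_fib scv.
case: eqP => [Eu|_] //; by move: H; rewrite Eu scv.
Qed.

Lemma Bc_adj b : Bc (adjmx F y r b).
Proof.
rewrite adjmxE; split => u v; rewrite !mx_ofE ?tau_inv // => H.
by rewrite row_const.
Qed.

Lemma Bc_E a : Bc (dualidem F r y a).
Proof.
rewrite dualidemE; split => u v; rewrite !mx_ofE ?(inj_eq (@tau_inj y)) ?tau_fib //.
by move=> H; rewrite eq_tau_nsc.
Qed.

Lemma one_ro u v : (1 : 'M[F]_N) (ro u) (ro v) = (u == v)%:R.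
Proof. by rewrite mxE (inj_eq (can_inj ioK)). Qed.

Lemma Bc_1 : Bc 1.
Proof.
split => u v; rewrite !one_ro ?(inj_eq (@tau_inj y)) //.
by move=> H; rewrite eq_tau_nsc.
Qed.

Lemma tau_p_eq u : kk y (r y u) == 2%N -> (tau y u == p (r y u)) = ~~ (u == p (r y u)).
Proof.
move=> k2; have [a Ea] : exists a, r y u = a by eexists.
rewrite Ea in k2 *; rewrite -tau_p in k2.
case: (fib_p Ea) => ->; first by rewrite eqxx (negbTE k2).
by rewrite tauK eqxx k2.
Qed.

Lemma Bc_cl z : Pidx z -> Bc (cl z).
Proof.
move=> Pz; split => u v; rewrite /cl !mx_ofE !clf_cls //.
  rewrite /cls !tau_fib; case Hs: (sc _ _ _) => //=.
  have /and3P[ka kc _] := Hs.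
  by rewrite !tau_p_eq //; case: (u == _); case: (v == _).
by move=> H; rewrite /cls tau_fib (negbTE H).
Qed.

Lemma Bc_gens x : x \in gens -> Bc x.
Proof.
rewrite mem_cat => /orP[] /mapP[a _ ->]; [exact: Bc_adj | exact: Bc_E].
Qed.

Lemma Bc_bas x : x \in bas -> Bc x.
Proof. by case/mapP => z; rewrite mem_filter => /andP[Pz _] ->; apply: Bc_cl. Qed.

Lemma TT_sub : (TT <= <<bas>>)%VS.
Proof.
apply: agenv_sub_modl; first by rewrite -memvE; apply: Bc_mem; apply: Bc_1.
apply/prodvP => g m Hg Hm; apply: Bc_mem; apply: Bc_mul.
  exact: (Bc_span Bc_gens).
exact: (Bc_span Bc_bas).
Qed.

Lemma Eleft a f : dualidem F r y a * mx_of f = mx_of (fun u v => (r y u == a)%:R * f u v).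
Proof.
rewrite dualidemE mx_ofM; apply: mx_of_eq => u v.
rewrite (bigD1 u) //= eqxx big1 ?addr0 // => w ne.
by rewrite eq_sym (negbTE ne) mul0r.
Qed.

Lemma Eright c f : mx_of f * dualidem F r y c = mx_of (fun u v => f u v * (r y v == c)%:R).
Proof.
rewrite dualidemE mx_ofM; apply: mx_of_eq => u v.
rewrite (bigD1 v) //= eqxx big1 ?addr0 // => w ne.
by rewrite (negbTE ne) mulr0.
Qed.

Lemma mx_of_sum (I : finType) (G : I -> X -> X -> F) :
  \sum_i mx_of (G i) = mx_of (fun u v => \sum_i G i u v).
Proof.
apply/matrixP => i j; rewrite summxE !mxE; apply: eq_bigr => k _; by rewrite mxE.
Qed.

Lemma TT_sum (I : finType) (G : I -> 'M[F]_N) : (forall i, G i \in TT) -> \sum_i G i \in TT.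
Proof. by move=> H; apply: memv_suml => i _; apply: H. Qed.

Lemma mem_eqTT (A B : 'M[F]_N) : A = B -> A \in TT -> B \in TT.
Proof. by move->. Qed.

Lemma J_in a c : mx_of (fun u v => ((r y u == a) && (r y v == c))%:R) \in TT.
Proof.
have : \sum_b (dualidem F r y a * adjmx F y r b * dualidem F r y c) \in TT.
  by apply: memv_suml => b _; rewrite !TT_mul ?TT_E ?TT_adj.
rewrite (eq_bigr (fun b => mx_of (fun u v => (r y u == a)%:R * (r u v == b)%:R * (r y v == c)%:R))); last first.
  by move=> b _; rewrite adjmxE Eleft Eright.
rewrite mx_of_sum; apply: mem_eqTT; apply: mx_of_eq => u v.
rewrite (bigD1 (r u v)) //= eqxx big1 ?addr0; last first.
  by move=> b ne; rewrite [_ == b]eq_sym (negbTE ne) mulr0 mul0r.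
by case: (r y u == a); case: (r y v == c); rewrite /= ?mulr1 ?mul1r ?mulr0 ?mul0r.
Qed.

Definition Uf a c u v := [&& r y u == a, r y v == c & (u == p a) == (v == p c)].
Definition Vf a c u v := [&& r y u == a, r y v == c & (u == p a) != (v == p c)].

Lemma pat_lk u v u' v' : r u v != r u (tau y v) -> r y u' = r y u -> r y v' = r y v ->
  (r u' v' == r u v) = ((u' == u) == (v' == v)).
Proof.
move=> ne Eu Ev.
have Nv : (tau y v == v) = false by apply/negbTE; apply: contraNneq ne => ->.
have Nu : (tau y u == u) = false.
  by apply/negbTE; apply: contraNneq ne => Eu'; rewrite -[X in _ == r X _]Eu' tau_inv.
case: (fib_cases Eu) => ->; case: (fib_cases Ev) => ->; rewrite ?eqxx ?Nu ?Nv //=.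
- by rewrite eq_sym (negbTE ne).
- by rewrite -{1}(tauK y v) tau_inv eq_sym (negbTE ne).
- by rewrite tau_inv eqxx.
Qed.

Lemma eq_fib2 a u u' : kk y a == 2%N -> r y u = a -> r y u' = a ->
  (u' == u) = ((u' == p a) == (u == p a)).
Proof.
rewrite -tau_p => k2 Eu Eu'.
case: (fib_p Eu) => ->; case: (fib_p Eu') => ->; rewrite ?eqxx ?(negbTE k2) //.
by rewrite eq_sym (negbTE k2).
Qed.

Lemma step_mx u v : r u v != r u (tau y v) ->
  dualidem F r y (r y u) * adjmx F y r (r u v) * dualidem F r y (r y v) =
  if (u == p (r y u)) == (v == p (r y v)) then mx_of (fun u' v' => (Uf (r y u) (r y v) u' v')%:R)
  else mx_of (fun u' v' => (Vf (r y u) (r y v) u' v')%:R).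
Proof.
move=> ne.
have /andP[ka kc] : (kk y (r y u) == 2%N) && (kk y (r y v) == 2%N).
  by apply: lk_k2; apply/existsP; exists u; apply/existsP; exists v; rewrite !eqxx ne.
rewrite adjmxE Eleft Eright /Uf /Vf.
case: ifP => H; apply: mx_of_eq => u' v';
  (case: (eqVneq (r y u') (r y u)) => Eu; last by rewrite /= !mul0r);
  (case: (eqVneq (r y v') (r y v)) => Ev; last by rewrite /= mulr0 ?andbF);
  rewrite ?eqxx /= mul1r mulr1 (pat_lk ne Eu Ev) (eq_fib2 ka erefl Eu) (eq_fib2 kc erefl Ev) /=;
  move: H; case: (u' == _); case: (u == _); case: (v' == _); case: (v == _) => //=.
Qed.

Definition Um a c := mx_of (fun u v => (Uf a c u v)%:R).
Definition Vm a c := mx_of (fun u v => (Vf a c u v)%:R).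

Lemma UV_lk x z : lk y x z -> Um x z \in TT /\ Vm x z \in TT.
Proof.
move=> L; have /andP[kx kz] := lk_k2 L.
case/existsP: L => u /existsP[v /and3P[/eqP Eu /eqP Ev ne]].
have ne2 : r u (tau y v) != r u (tau y (tau y v)) by rewrite tauK eq_sym.
have H1 := step_mx ne; have H2 := step_mx ne2.
have M1 : dualidem F r y (r y u) * adjmx F y r (r u v) * dualidem F r y (r y v) \in TT.
  by rewrite !TT_mul ?TT_E ?TT_adj.
have M2 : dualidem F r y (r y u) * adjmx F y r (r u (tau y v)) *
          dualidem F r y (r y (tau y v)) \in TT.
  by rewrite !TT_mul ?TT_E ?TT_adj.
rewrite H1 in M1; rewrite H2 in M2.
move: M1 M2; rewrite !tau_fib tau_p_eq; last by rewrite Ev.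
rewrite Eu Ev /Um /Vm.
by case: (u == _); case: (v == _) => /= A B.
Qed.

Lemma fib_sumF (G : X -> F) a : kk y a == 2%N ->
  \sum_w (r y w == a)%:R * G w = G (p a) + G (tau y (p a)).
Proof.
move=> k2; rewrite (bigID (fun w => r y w == a)) /= [X in _ + X]big1 ?addr0; last first.
  by move=> w /negbTE ->; rewrite mul0r.
rewrite (eq_bigl (fun w => r y w == r y (p a))); last by move=> w; rewrite p_fib.
rewrite (@fib_sum _ 0 +%R) -tau_p in k2 *; rewrite (negbTE k2) !p_fib tau_fib p_fib eqxx.
by rewrite !mul1r.
Qed.

Lemma UU a x z : kk y x == 2%N -> Um a x * Um x z = Um a z.
Proof.
move=> k2; rewrite /Um mx_ofM; apply: mx_of_eq => u v.
rewrite (eq_bigr (fun w => (r y w == x)%:R * ((Uf a x u w)%:R * (Uf x z w v)%:R))); last first.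
  by move=> w _; rewrite /Uf; case: (r y w == x); rewrite /= ?mul1r ?mul0r ?andbF ?mulr0n ?mul0r.
rewrite fib_sumF // /Uf p_fib tau_fib p_fib eqxx.
have : (tau y (p x) == p x) = false by apply/negbTE; rewrite tau_p.
move=> ->; rewrite !eqxx; case: (r y u == a); case: (r y v == z); case: (u == p a); case: (v == p z) => /=;
by rewrite ?mulr1n ?mulr0n ?mulr1 ?mul1r ?mulr0 ?mul0r ?addr0 ?add0r.
Qed.

Lemma VU a x z : kk y x == 2%N -> Vm a x * Um x z = Vm a z.
Proof.
move=> k2; rewrite /Um /Vm mx_ofM; apply: mx_of_eq => u v.
rewrite (eq_bigr (fun w => (r y w == x)%:R * ((Vf a x u w)%:R * (Uf x z w v)%:R))); last first.
  by move=> w _; rewrite /Vf; case: (r y w == x); rewrite /= ?mul1r ?mul0r ?andbF ?mulr0n ?mul0r.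
rewrite fib_sumF // /Uf /Vf p_fib tau_fib p_fib eqxx.
have : (tau y (p x) == p x) = false by apply/negbTE; rewrite tau_p.
move=> ->; rewrite !eqxx; case: (r y u == a); case: (r y v == z); case: (u == p a); case: (v == p z) => /=;
by rewrite ?mulr1n ?mulr0n ?mulr1 ?mul1r ?mulr0 ?mul0r ?addr0 ?add0r.
Qed.

Lemma lk_refl a : kk y a == 2%N -> lk y a a.
Proof.
rewrite -tau_p => k2; apply/existsP; exists (p a); apply/existsP; exists (p a).
rewrite p_fib eqxx /= r_refl eq_sym r_diag eq_sym; exact: k2.
Qed.

Lemma U_refl a : kk y a == 2%N -> Um a a = dualidem F r y a.
Proof.
move=> k2; rewrite dualidemE /Um; apply: mx_of_eq => u v; rewrite /Uf.
case: (eqVneq (r y u) a) => Eu; last by rewrite andbF.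
case: (eqVneq (r y v) a) => Ev /=; last by case: eqP => //= E; move: Ev; rewrite -E Eu eqxx.
by rewrite (eq_fib2 k2 Ev Eu) andbT.
Qed.

Lemma path_UV a c : kk y a == 2%N -> connect (lk y) a c -> Um a c \in TT /\ Vm a c \in TT.
Proof.
move=> ka /connectP[pth Hp ->]; elim/last_ind: pth Hp => [_|pth z IH] /=.
  by rewrite U_refl // TT_E; case: (UV_lk (lk_refl ka)).
rewrite rcons_path last_rcons => /andP[Hp Hl].
have [IU IV] := IH Hp.
have /andP[kx _] := lk_k2 Hl.
have [JU JV] := UV_lk Hl.
by rewrite -(UU a z kx) -(VU a z kx) !TT_mul.
Qed.

Lemma cl_TT x : Pidx x -> cl x \in TT.
Proof.
case: x => [[a c] b]; rewrite /Pidx /cl /clf /=.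
case: b => /= H.
  by have /and3P[ka _ C] := H; case: (path_UV ka C).
case Hs: (sc y a c).
  by have /and3P[ka _ C] := Hs; case: (path_UV ka C).
by have := J_in a c; apply: mem_eqTT; apply: mx_of_eq => u v; rewrite andbT.
Qed.

Lemma TT_eq : TT = <<bas>>%VS.
Proof.
apply/eqP; rewrite eqEsubv TT_sub /=; apply/span_subvP => m /mapP[x].
by rewrite mem_filter => /andP[Px _] ->; apply: cl_TT.
Qed.

Lemma dimTT : terwilliger_dim F r y = count Pidx (enum {: Idx}).
Proof. by rewrite /terwilliger_dim -/TT TT_eq dim_bas /idx size_filter. Qed.

End Mx.

End Basic.

Theorem corollary4p7 (X : finType) (d : nat) (r : X -> X -> 'I_d.+1) :
  is_scheme r -> quasi_thin r ->
  forall (F1 F2 : fieldType) (y1 y2 : X),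
    terwilliger_dim F1 r y1 = terwilliger_dim F2 r y2.
Proof.
move=> hS hQ F1 F2 y1 y2.
rewrite (dimTT hS hQ F1 y1) (dimTT hS hQ F2 y2).
by apply: eq_count => x; rewrite /Pidx (sc_indep hS hQ y1 y2).
Qed.
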